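(* Let $\mathfrak{M}=\bigotimes_{i\in I}\mathfrak{P}_i$ be a Segre product of projective spaces $\mathfrak{P}_i$ ($I$ countable, $|I|\ge2$) and let $\mathcal{H}$ be a spiky hyperplane of $\mathfrak{M}$. Then the complement $\mathfrak{M}\setminus\mathcal{H}$ (with its parallelism $\parallel_\mathcal{H}$) is not isomorphic to any Segre product of affine spaces.
   Context: A partial linear space is a pair $(S,\mathcal{L})$ of points and lines such that every line has at least two points, every point lies on a line, two distinct lines share at most one point; it is a linear space if any two points are collinear. A projective space is a linear space with lines of at least $3$ points which is Veblenian (for two distinct lines $L_1,L_2$ through $p$ and two distinct lines $K_1,K_2$ not through $p$ each meeting $L_1,L_2$, the lines $K_1,K_2$ meet). Subspace: any line meeting it in at least two points lies in it; hyperplane: proper subspace meeting every line; a set $X$ is spiky if every point of $X$ is collinear with some point not in $X$. Segre product: points $\prod S_i$, lines $a[i/l]=\{a':a'_i\in l,\ a'_s=a_s\ (s\ne i)\}$. For a hyperplane $\mathcal{H}$, each line $L\not\subseteq\mathcal{H}$ meets $\mathcal{H}$ in a unique point $L^\infty$; $\mathfrak{M}\setminus\mathcal{H}$ has points $S\setminus\mathcal{H}$, lines $L\setminus\mathcal{H}$ ($L\not\subseteq\mathcal{H}$), parallelism $L\parallel_\mathcal{H}K$ iff $L^\infty=K^\infty$. An affine space is $(S,\mathcal{L},\parallel)$ with $(S,\mathcal{L})$ a linear space, $\parallel$ an equivalence on lines such that parallel lines sharing a point coincide and through every point there is a line parallel to any given line, satisfying the Tamaschke Bedingung and the parallelogram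 completion condition. The Segre product of structures $(S_i,\mathcal{L}_i,\parallel_i)$ is the Segre product of $(S_i,\mathcal{L}_i)$ with parallelism: $a[i/l]\parallel b[j/k]$ iff $i=j$ and $l\parallel_i k$. Isomorphism means a bijection of points mapping lines onto lines and preserving parallelism, both ways. *)

(* Defs.v *)
(* Incidence structures are given by a point type P
   and a predicate Lin on subsets (P -> Prop) telling which subsets are lines.
   Lines are compared extensionally via [same]. *)

Definition same {P : Type} (L K : P -> Prop) : Prop := forall x, L x <-> K x.

Definition partial_linear_space (P : Type) (Lin : (P -> Prop) -> Prop) : Prop :=
  (forall L, Lin L -> exists x y, x <> y /\ L x /\ L y) /\
  (forall p, exists L, Lin L /\ L p) /\
  (forall L K, Lin L -> Lin K -> ~ same L K ->
     forall x y, L x -> L y -> K x -> K y -> x = y).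

Definition collinear {P : Type} (Lin : (P -> Prop) -> Prop) (x y : P) : Prop :=
  exists L, Lin L /\ L x /\ L y.

Definition linear_space (P : Type) (Lin : (P -> Prop) -> Prop) : Prop :=
  partial_linear_space P Lin /\ forall x y : P, collinear Lin x y.

Definition meet {P : Type} (L K : P -> Prop) : Prop := exists x, L x /\ K x.

Definition veblenian (P : Type) (Lin : (P -> Prop) -> Prop) : Prop :=
  forall (p : P) L1 L2 K1 K2,
    Lin L1 -> Lin L2 -> Lin K1 -> Lin K2 ->
    ~ same L1 L2 -> L1 p -> L2 p ->
    ~ same K1 K2 -> ~ K1 p -> ~ K2 p ->
    meet K1 L1 -> meet K1 L2 -> meet K2 L1 -> meet K2 L2 ->
    meet K1 K2.

Definition projective_space (P : Type) (Lin : (P -> Prop) -> Prop) : Prop :=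
  linear_space P Lin /\
  (forall L, Lin L -> exists x y z, L x /\ L y /\ L z /\ x <> y /\ x <> z /\ y <> z) /\
  veblenian P Lin.

Definition subspace {P : Type} (Lin : (P -> Prop) -> Prop) (X : P -> Prop) : Prop :=
  forall L, Lin L -> (exists x y, x <> y /\ L x /\ L y /\ X x /\ X y) ->
    forall z, L z -> X z.

Definition hyperplane {P : Type} (Lin : (P -> Prop) -> Prop) (X : P -> Prop) : Prop :=
  subspace Lin X /\ (exists x, ~ X x) /\ (forall L, Lin L -> meet L X).

Definition spiky {P : Type} (Lin : (P -> Prop) -> Prop) (X : P -> Prop) : Prop :=
  forall x, X x -> exists y, ~ X y /\ collinear Lin x y.

(* Segre product: points are dependent functions, lines are a[i/l]. *)
Definition segre_line {I : Type} {P : I -> Type} (i : I) (a : forall s, P s)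
  (l : P i -> Prop) : (forall s, P s) -> Prop :=
  fun x => l (x i) /\ forall s, s <> i -> x s = a s.

Definition segre_lines {I : Type} {P : I -> Type}
  (Lin : forall i, (P i -> Prop) -> Prop) : ((forall s, P s) -> Prop) -> Prop :=
  fun Y => exists i a l, Lin i l /\ same Y (segre_line i a l).

Definition segre_par {I : Type} {P : I -> Type}
  (Lin : forall i, (P i -> Prop) -> Prop)
  (Par : forall i, (P i -> Prop) -> (P i -> Prop) -> Prop)
  : ((forall s, P s) -> Prop) -> ((forall s, P s) -> Prop) -> Prop :=
  fun Y Y' => exists i a b l k, Lin i l /\ Lin i k /\ Par i l k /\
     same Y (segre_line i a l) /\ same Y' (segre_line i b k).

(* Complement of a hyperplane H: points not in H, lines L \ H for L not in H,
   parallelism L\H || K\H iff L^oo = K^oo (the point where L resp. K meets H). *)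
Definition cpoint {P : Type} (H : P -> Prop) : Type := {x : P | ~ H x}.

Definition infty_pt {P : Type} (H L : P -> Prop) (p : P) : Prop := L p /\ H p.

Definition restricts {P : Type} (Lin : (P -> Prop) -> Prop) (H : P -> Prop)
  (Y : cpoint H -> Prop) (L : P -> Prop) : Prop :=
  Lin L /\ ~ (forall x, L x -> H x) /\ forall y : cpoint H, Y y <-> L (proj1_sig y).

Definition complement_lines {P : Type} (Lin : (P -> Prop) -> Prop) (H : P -> Prop)
  : (cpoint H -> Prop) -> Prop :=
  fun Y => exists L, restricts Lin H Y L.

Definition complement_par {P : Type} (Lin : (P -> Prop) -> Prop) (H : P -> Prop)
  : (cpoint H -> Prop) -> (cpoint H -> Prop) -> Prop :=
  fun Y Y' => exists L K, restricts Lin H Y L /\ restricts Lin H Y' K /\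
     exists p, infty_pt H L p /\ infty_pt H K p.

Definition noncollinear {P : Type} (Lin : (P -> Prop) -> Prop) (a b c : P) : Prop :=
  ~ exists L, Lin L /\ L a /\ L b /\ L c.

Definition affine_space (P : Type) (Lin : (P -> Prop) -> Prop)
  (Par : (P -> Prop) -> (P -> Prop) -> Prop) : Prop :=
  linear_space P Lin /\
  (forall L K, Par L K -> Lin L /\ Lin K) /\
  (forall L, Lin L -> Par L L) /\
  (forall L K, Par L K -> Par K L) /\
  (forall L K M, Par L K -> Par K M -> Par L M) /\
  (forall L K, Par L K -> meet L K -> same L K) /\
  (forall L p, Lin L -> exists K, Lin K /\ Par K L /\ K p) /\
  (forall a b c Lab Lac Lbc L, noncollinear Lin a b c ->
     Lin Lab -> Lab a -> Lab b -> Lin Lac -> Lac a -> Lac c ->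
     Lin Lbc -> Lbc b -> Lbc c -> Lin L -> Par L Lab -> meet L Lac ->
     meet L Lbc) /\
  (forall a b c Lab Lac L K, noncollinear Lin a b c ->
     Lin Lab -> Lab a -> Lab b -> Lin Lac -> Lac a -> Lac c ->
     Lin L -> Par L Lab -> L c -> Lin K -> Par K Lac -> K b ->
     meet L K).

Definition image {X Y : Type} (f : X -> Y) (Z : X -> Prop) : Y -> Prop :=
  fun y => exists x, Z x /\ f x = y.

Definition preimage {X Y : Type} (f : X -> Y) (W : Y -> Prop) : X -> Prop :=
  fun x => W (f x).

Definition isomorphism {X Y : Type}
  (LX : (X -> Prop) -> Prop) (PX : (X -> Prop) -> (X -> Prop) -> Prop)
  (LY : (Y -> Prop) -> Prop) (PY : (Y -> Prop) -> (Y -> Prop) -> Prop)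
  (f : X -> Y) : Prop :=
  (exists g : Y -> X, (forall x, g (f x) = x) /\ (forall y, f (g y) = y)) /\
  (forall Z, LX Z -> LY (image f Z)) /\
  (forall W, LY W -> LX (preimage f W)) /\
  (forall Z Z', LX Z -> LX Z' -> (PX Z Z' <-> PY (image f Z) (image f Z'))) /\
  (forall W W', LY W -> LY W' -> (PY W W' <-> PX (preimage f W) (preimage f W'))).

Definition countable (I : Type) : Prop := exists f : I -> nat, forall x y, f x = f y -> x = y.

(* Main.v *)
Require Import Defs.
From Stdlib Require Import Classical ClassicalEpsilon FunctionalExtensionality Eqdep.

Section Aux.
Context {I : Type} {P : I -> Type}.

Definition upd (a : forall s, P s) (i : I) (z : P i) : forall s, P s :=
  fun s => match excluded_middle_informative (i = s) with
           | left e => eq_rect i P z s e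
           | right _ => a s end.

Lemma upd_eq a i z : upd a i z i = z.
Proof.
  unfold upd. destruct (excluded_middle_informative (i = i)) as [e|n].
  - symmetry. apply Eqdep.EqdepTheory.eq_rect_eq.
  - now exfalso.
Qed.

Lemma upd_neq a i z s : s <> i -> upd a i z s = a s.
Proof.
  intro n. unfold upd. destruct (excluded_middle_informative (i = s)) as [e|n'].
  - subst. now exfalso.
  - reflexivity.
Qed.

Lemma fext_off (u v : forall s, P s) i : u i = v i -> (forall s, s <> i -> u s = v s) -> u = v.
Proof.
  intros Hi Ho. apply functional_extensionality_dep. intro s.
  destruct (classic (s = i)) as [->|n]; auto.
Qed.

Lemma noncol (Lin : forall i, (P i -> Prop) -> Prop) (p x : forall s, P s) i j :
  i <> j -> p i <> x i -> p j <> x j -> ~ collinear (segre_lines Lin) p x.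
Proof.
  intros Hij Hi Hj [L [[k [b [m [Hm Hs]]]] [Lp Lx]]].
  apply Hs in Lp. apply Hs in Lx. destruct Lp as [_ Hp]. destruct Lx as [_ Hx].
  destruct (classic (i = k)) as [e|n].
  - subst k. apply Hj. rewrite (Hp j (not_eq_sym Hij)), (Hx j (not_eq_sym Hij)). reflexivity.
  - apply Hi. rewrite (Hp i n), (Hx i n). reflexivity.
Qed.

Lemma three_pts (Lin : forall i, (P i -> Prop) -> Prop)
  (Hproj : forall i, projective_space (P i) (Lin i)) N :
  segre_lines Lin N -> exists u v w, N u /\ N v /\ N w /\ u <> v /\ u <> w /\ v <> w.
Proof.
  intros [i [a [l [Hl Hs]]]].
  destruct (proj1 (proj2 (Hproj i)) l Hl) as [z1 [z2 [z3 [h1 [h2 [h3 [d12 [d13 d23]]]]]]]].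
  assert (On : forall z, l z -> N (upd a i z)).
  { intros z hz. apply Hs. split. rewrite upd_eq; exact hz.
    intros s n. apply upd_neq; exact n. }
  assert (Df : forall z z', z <> z' -> upd a i z <> upd a i z').
  { intros z z' d e. apply d. rewrite <- (upd_eq a i z), <- (upd_eq a i z'), e. reflexivity. }
  exists (upd a i z1), (upd a i z2), (upd a i z3). repeat split; auto.
Qed.

Lemma determined (Lin : forall i, (P i -> Prop) -> Prop)
  (Hproj : forall i, projective_space (P i) (Lin i)) N K u v :
  segre_lines Lin N -> segre_lines Lin K -> u <> v -> N u -> N v -> K u -> K v ->
  forall z, N z -> K z.
Proof.
  intros [i [a [l [Hl Hs]]]] [k [b [m [Hm Hs']]]] Huv Nu Nv Ku Kv.
  apply Hs in Nu. apply Hs in Nv. apply Hs' in Ku. apply Hs' in Kv.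
  destruct Nu as [lu ua]. destruct Nv as [lv va]. destruct Ku as [mu ub]. destruct Kv as [mv vb].
  destruct (classic (i = k)) as [e|n].
  2:{ exfalso. apply Huv. apply (fext_off u v i).
      - rewrite (ub i n), (vb i n). reflexivity.
      - intros s ns. rewrite (ua s ns), (va s ns). reflexivity. }
  subst k.
  assert (Hi : u i <> v i).
  { intro e. apply Huv. apply (fext_off u v i e). intros s ns. rewrite (ua s ns), (va s ns). reflexivity. }
  destruct (Hproj i) as [[[_ [_ Hpl]] _] _].
  assert (Hlm : same l m).
  { destruct (classic (same l m)) as [h|h]; auto. exfalso. apply Hi. exact (Hpl l m Hl Hm h _ _ lu lv mu mv). }
  intros z Nz. apply Hs in Nz. destruct Nz as [lz za]. apply Hs'. split.
  - apply Hlm; exact lz.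
  - intros s ns. rewrite (za s ns), <- (ua s ns). apply ub; exact ns.
Qed.

End Aux.

Lemma key1 (I : Type) (P : I -> Type)
  (Lin : forall i, (P i -> Prop) -> Prop) (HI2 : exists i j : I, i <> j)
  (Hproj : forall i, projective_space (P i) (Lin i))
  (H : (forall i, P i) -> Prop)
  (Hhyp : hyperplane (segre_lines Lin) H) :
  exists p x0, H p /\ ~ H x0 /\ ~ collinear (segre_lines Lin) p x0.
Proof.
  destruct Hhyp as [Hsub [[x Hx] Hmeet]].
  destruct HI2 as [i [j Hij]].
  destruct (proj1 (proj2 (proj1 (proj1 (Hproj i)))) (x i)) as [l [Hl lx]].
  destruct (Hmeet (segre_line i x l)) as [q [[lq qoff] qH]].
  { exists i, x, l. split; [exact Hl| intro; tauto]. }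
  assert (qi : q i <> x i).
  { intro e. apply Hx. rewrite <- (fext_off q x i e qoff). exact qH. }
  destruct (proj1 (proj2 (proj1 (proj1 (Hproj j)))) (x j)) as [m [Hm mx]].
  destruct (Hmeet (segre_line j x m)) as [q' [[mq q'off] q'H]].
  { exists j, x, m. split; [exact Hm| intro; tauto]. }
  assert (q'j : q' j <> x j).
  { intro e. apply Hx. rewrite <- (fext_off q' x j e q'off). exact q'H. }
  destruct (proj1 (proj2 (Hproj j)) m Hm) as [z1 [z2 [z3 [h1 [h2 [h3 [d12 [d13 d23]]]]]]]].
  assert (Ht : exists t : P j, t <> x j /\ t <> q' j).
  { destruct (classic (z1 = x j)), (classic (z1 = q' j)), (classic (z2 = x j)),
      (classic (z2 = q' j)), (classic (z3 = x j)), (classic (z3 = q' j));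
    first [ exists z1; split; assumption | exists z2; split; assumption
          | exists z3; split; assumption | exfalso; congruence ]. }
  destruct Ht as [t [tx tq]].
  destruct (classic (H (upd q j t))) as [Hr|Hr].
  - exists (upd q j t), x. repeat split; auto.
    apply (noncol Lin _ _ i j Hij).
    + rewrite upd_neq by exact Hij. exact qi.
    + rewrite upd_eq. exact tx.
  - exists q', (upd q j t). repeat split; auto.
    apply (noncol Lin _ _ i j Hij).
    + rewrite upd_neq by exact Hij. rewrite (q'off i Hij). auto.
    + rewrite upd_eq. auto.
Qed.

Theorem proposition4p18 (I : Type) (P : I -> Type)
  (Lin : forall i, (P i -> Prop) -> Prop)
  (HI : countable I) (HI2 : exists i j : I, i <> j)
  (Hproj : forall i, projective_space (P i) (Lin i))
  (H : (forall i, P i) -> Prop)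
  (Hhyp : hyperplane (segre_lines Lin) H)
  (Hspiky : spiky (segre_lines Lin) H) :
  forall (J : Type) (A : J -> Type)
    (ALin : forall j, (A j -> Prop) -> Prop)
    (APar : forall j, (A j -> Prop) -> (A j -> Prop) -> Prop),
    (forall j, affine_space (A j) (ALin j) (APar j)) ->
    ~ exists f : cpoint H -> (forall j, A j),
        isomorphism (complement_lines (segre_lines Lin) H)
                    (complement_par (segre_lines Lin) H)
                    (segre_lines ALin) (segre_par ALin APar) f.
Proof.
  intros J A ALin APar Haff [f [[g [gf fg]] [HL1 [HL2 [HP1 HP2]]]]].
  destruct (key1 I P Lin HI2 Hproj H Hhyp) as [p [x0 [Hp [Hx0 Hnc]]]].
  destruct (Hspiky p Hp) as [y [Hy [N [HN [Np Ny]]]]].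
  destruct Hhyp as [Hsub _].
  assert (Huniq : forall a b, N a -> N b -> H a -> H b -> a = b).
  { intros a b Na Nb Ha Hb. destruct (classic (a = b)) as [e|n]; auto.
    exfalso. apply Hy. apply (Hsub N HN); auto. exists a, b; auto. }
  set (Y := fun c : cpoint H => N (proj1_sig c)).
  assert (HY : complement_lines (segre_lines Lin) H Y).
  { exists N. split; [exact HN| split].
    - intro h. apply Hy. apply h. exact Ny.
    - intro c. tauto. }
  pose proof (HL1 Y HY) as HfY.
  destruct HfY as [j [a [l [Hl Hsame]]]].
  set (c0 := exist (fun z => ~ H z) x0 Hx0 : cpoint H).
  destruct (Haff j) as [_ [_ [_ [_ [_ [_ [Hthr _]]]]]]].
  destruct (Hthr l (f c0 j) Hl) as [k [Hk [Hkl Hkx]]].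
  set (W := segre_line j (f c0) k).
  assert (HW : segre_lines ALin W).
  { exists j, (f c0), k. split; [exact Hk| intro; tauto]. }
  assert (HPW : segre_par ALin APar W (image f Y)).
  { exists j, (f c0), a, k, l. split; [exact Hk|]. split; [exact Hl|].
    split; [exact Hkl|]. split; [intro; tauto| exact Hsame]. }
  apply (proj1 (HP2 W (image f Y) HW (HL1 Y HY))) in HPW.
  destruct HPW as [L' [K' [[HL' [_ iffL']] [[HK' [_ iffK']] [p'' [[L'p H1] [K'p _]]]]]]].
  assert (L'x0 : L' x0).
  { apply (iffL' c0). unfold preimage, W, segre_line. split; auto. }
  destruct (three_pts Lin Hproj N HN) as [u1 [u2 [u3 [N1 [N2 [N3 [d12 [d13 d23]]]]]]]].
  assert (Kon : forall u (hu : ~ H u), N u -> K' u).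
  { intros u hu Nu. apply (iffK' (exist _ u hu)). exists (exist _ u hu). split; auto. }
  assert (Two : exists u v, u <> v /\ N u /\ N v /\ ~ H u /\ ~ H v).
  { destruct (classic (H u1)) as [h1|h1], (classic (H u2)) as [h2|h2], (classic (H u3)) as [h3|h3].
    all: first [ exists u1, u2; now repeat split | exists u1, u3; now repeat split
               | exists u2, u3; now repeat split
               | exfalso; first [ exact (d12 (Huniq _ _ N1 N2 h1 h2))
                                | exact (d13 (Huniq _ _ N1 N3 h1 h3))
                                | exact (d23 (Huniq _ _ N2 N3 h2 h3)) ] ]. }
  destruct Two as [u [v [duv [Nu [Nv [hu hv]]]]]].
  assert (Np'' : N p'').
  { apply (determined Lin Hproj K' N u v HK' HN duv (Kon u hu Nu) (Kon v hv Nv) Nu Nv).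
    exact K'p. }
  assert (e : p'' = p) by (apply Huniq; auto).
  subst p''. apply Hnc. exists L'. auto.
Qed.
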